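(* In the VI setting below, let $(u_k,\Delta_k)\subset\mathbb{R}^n\times(0,\infty)$ with $u_k\to u$ and $\Delta_k\to0$. Then there exists $K\in\mathbb{N}$ such that $\mathcal P(u_k,\Delta_k)\subseteq\mathcal B(u)$ and $\mathcal G(u_k,\Delta_k)\subseteq\partial_BS(u)$ for all $k\ge K$. In particular, $\sup_{G\in\mathcal G(u_k,\Delta_k)}\inf_{W\in\partial_BS(u)}\|G-W\|\to0$.
   Context: VI setting: $A\in\mathbb{R}^{n\times n}$ symmetric positive definite with smallest/largest eigenvalues $\lambda_{\min},\lambda_{\max}$; $\|v\|_1=\sum_i|v_i|$. For $u\in\mathbb{R}^n$, $S(u)=y$ is the unique solution of $\langle Ay,v-y\rangle+\|v\|_1-\|y\|_1\ge\langle u,v-y\rangle$ for all $v$; equivalently there is $q$ with $Ay+q=u$, $y_iq_i=|y_i|$, $|q_i|\le1$, and then $q=u-Ay$. $S$ is globally Lipschitz. Index sets (for $y=S(u)$, $q=u-Ay$): $\mathcal A_s(u)=\{i:|q_i|<1\}$, $\mathcal I(u)=\{i:y_i\neq0\}$, $\mathcal B(u)=\{i:y_i=0,|q_i|=1\}$. Let $L_y=1/\lambda_{\min}$, $L_q=\lambda_{\max}/\lambda_{\min}+1$. Possibly biactive indices: $\mathcal P(u,\Delta):=\{i: |y_i|<L_y\Delta \text{ and } ||q_i|-1|<L_q\Delta\}$. For $\mathcal N\subseteq\{1,\dots,n\}$: $A(\mathcal N)_{ij}=A_{ij}$ if $i,j\notin\mathcal N$, $A(\mathcal N)_{ij}=0$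 if $i\ne j$ and ($i\in\mathcal N$ or $j\in\mathcal N$), $A(\mathcal N)_{ii}=1$ if $i\in\mathcal N$; $\chi(\mathcal N)$ is diagonal with $\chi(\mathcal N)_{ii}=1$ for $i\notin\mathcal N$, $0$ otherwise. Define $\mathcal G(u,\Delta):=\{A(\mathcal A_s(u)\cup\mathcal B_0)^{-1}\chi(\mathcal A_s(u)\cup\mathcal B_0):\mathcal B_0\subseteq\mathcal P(u,\Delta)\}$. $\partial_BS(u)$: all limits $\lim_jS'(u_j)$ with $u_j\to u$ and $S$ differentiable at $u_j$. *)

(* Defs.v *)
(* Stdlib (classical reals). Vectors in R^n are functions nat -> R,
   matrices are nat -> nat -> R; only indices < n are meaningful. *)
From Stdlib Require Import Reals Lra List ClassicalEpsilon.
Import ListNotations.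
Open Scope R_scope.

Definition vec := nat -> R.
Definition mat := nat -> nat -> R.

Definition sumR (n : nat) (f : nat -> R) : R := fold_right Rplus 0 (map f (seq 0 n)).

Definition dot (n : nat) (x y : vec) : R := sumR n (fun i => x i * y i).
Definition norm1 (n : nat) (x : vec) : R := sumR n (fun i => Rabs (x i)).
Definition vnorm (n : nat) (x : vec) : R := sqrt (dot n x x).
Definition mv (n : nat) (M : mat) (x : vec) : vec := fun i => sumR n (fun j => M i j * x j).
Definition mm (n : nat) (M N : mat) : mat := fun i j => sumR n (fun k => M i k * N k j).
Definition mnorm (n : nat) (M : mat) : R := sqrt (sumR n (fun i => sumR n (fun j => M i j ^ 2))).
Definition idm (i j : nat) : R := if Nat.eqb i j then 1 else 0.

Definition symmetric (n : nat) (A : mat) : Prop :=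
  forall i j, (i < n)%nat -> (j < n)%nat -> A i j = A j i.
Definition pos_def (n : nat) (A : mat) : Prop :=
  forall x : vec, (exists i, (i < n)%nat /\ x i <> 0) -> dot n x (mv n A x) > 0.
Definition is_eigenvalue (n : nat) (A : mat) (l : R) : Prop :=
  exists x : vec, (exists i, (i < n)%nat /\ x i <> 0) /\
    forall i, (i < n)%nat -> mv n A x i = l * x i.
Definition is_min_eigenvalue n A l : Prop :=
  is_eigenvalue n A l /\ forall m, is_eigenvalue n A m -> l <= m.
Definition is_max_eigenvalue n A l : Prop :=
  is_eigenvalue n A l /\ forall m, is_eigenvalue n A m -> m <= l.

Definition solves_VI (n : nat) (A : mat) (u y : vec) : Prop :=
  forall v : vec,
    dot n (mv n A y) (fun i => v i - y i) + norm1 n v - norm1 n y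
      >= dot n u (fun i => v i - y i).

Definition qv (n : nat) (A : mat) (S : vec -> vec) (u : vec) : vec :=
  fun i => u i - mv n A (S u) i.

Definition As_set n A S u (i : nat) : Prop := (i < n)%nat /\ Rabs (qv n A S u i) < 1.
Definition I_set n (S : vec -> vec) u (i : nat) : Prop := (i < n)%nat /\ S u i <> 0.
Definition B_set n A S u (i : nat) : Prop :=
  (i < n)%nat /\ S u i = 0 /\ Rabs (qv n A S u i) = 1.

Definition L_y (lmin : R) : R := 1 / lmin.
Definition L_q (lmin lmax : R) : R := lmax / lmin + 1.

Definition P_set n A S (lmin lmax : R) u (D : R) (i : nat) : Prop :=
  (i < n)%nat /\ Rabs (S u i) < L_y lmin * D /\
  Rabs (Rabs (qv n A S u i) - 1) < L_q lmin lmax * D.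

Definition inb (P : Prop) : bool :=
  if excluded_middle_informative P then true else false.

Definition A_N (A : mat) (N : nat -> Prop) : mat :=
  fun i j => if orb (inb (N i)) (inb (N j)) then idm i j else A i j.
Definition chi_N (N : nat -> Prop) : mat :=
  fun i j => if Nat.eqb i j then (if inb (N i) then 0 else 1) else 0.

Definition is_inverse (n : nat) (M Minv : mat) : Prop :=
  forall i j, (i < n)%nat -> (j < n)%nat ->
    mm n M Minv i j = idm i j /\ mm n Minv M i j = idm i j.

Definition G_set n A S lmin lmax u D (G : mat) : Prop :=
  exists B0 : nat -> Prop, (forall i, B0 i -> P_set n A S lmin lmax u D i) /\
    let N := fun i => As_set n A S u i \/ B0 i in
    exists Minv, is_inverse n (A_N A N) Minv /\
      forall i j, (i < n)%nat -> (j < n)%nat -> G i j = mm n Minv (chi_N N) i j.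

Definition has_derivative (n : nat) (S : vec -> vec) (u : vec) (J : mat) : Prop :=
  forall eps, eps > 0 -> exists delta, delta > 0 /\
    forall h : vec, vnorm n h < delta ->
      vnorm n (fun i => S (fun k => u k + h k) i - S u i - mv n J h i) <= eps * vnorm n h.

Definition in_dB (n : nat) (S : vec -> vec) (u : vec) (W : mat) : Prop :=
  exists (uj : nat -> vec) (Jj : nat -> mat),
    (forall i, (i < n)%nat -> Un_cv (fun j => uj j i) (u i)) /\
    (forall j, has_derivative n S (uj j) (Jj j)) /\
    (forall i k, (i < n)%nat -> (k < n)%nat -> Un_cv (fun j => Jj j i k) (W i k)).

(* Main.v *)
Require Import Defs.
From Stdlib Require Import Reals Lra Lia Psatz List ClassicalEpsilon Classical.
Import ListNotations.
Open Scope R_scope.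

Lemma sumR_0 f : sumR 0 f = 0.
Proof. reflexivity. Qed.

Lemma sumR_S m f : sumR (S m) f = sumR m f + f m.
Proof.
  unfold sumR. rewrite seq_S, map_app, fold_right_app. simpl.
  generalize (map f (seq 0 m)). intro l.
  induction l; simpl; [lra| rewrite IHl; lra].
Qed.

Lemma sumR_ext m f g : (forall i, (i < m)%nat -> f i = g i) -> sumR m f = sumR m g.
Proof.
  induction m; intros H; [reflexivity|]. rewrite !sumR_S.
  rewrite IHm by (intros; apply H; lia). rewrite H by lia. reflexivity.
Qed.

Lemma sumR_plus m f g : sumR m (fun i => f i + g i) = sumR m f + sumR m g.
Proof. induction m; [rewrite !sumR_0; lra|]. rewrite !sumR_S, IHm. lra. Qed.
Lemma sumR_minus m f g : sumR m (fun i => f i - g i) = sumR m f - sumR m g.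
Proof. induction m; [rewrite !sumR_0; lra|]. rewrite !sumR_S, IHm. lra. Qed.
Lemma sumR_scal m c f : sumR m (fun i => c * f i) = c * sumR m f.
Proof. induction m; [rewrite !sumR_0; lra|]. rewrite !sumR_S, IHm. lra. Qed.
Lemma sumR_le m f g : (forall i, (i<m)%nat -> f i <= g i) -> sumR m f <= sumR m g.
Proof. induction m; intro H; [rewrite !sumR_0; lra|]. rewrite !sumR_S.
  assert (f m <= g m) by (apply H; lia). assert (sumR m f <= sumR m g) by (apply IHm; intros; apply H; lia). lra. Qed.
Lemma sumR_nonneg m f : (forall i, (i<m)%nat -> 0 <= f i) -> 0 <= sumR m f.
Proof. intro H. replace 0 with (sumR m (fun _ => 0)). apply sumR_le; auto.
  clear H. induction m; [reflexivity|]. rewrite sumR_S, IHm; lra. Qed.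
Lemma sumR_zero m f : (forall i, (i<m)%nat -> f i = 0) -> sumR m f = 0.
Proof. induction m; intro H; [reflexivity|]. rewrite sumR_S, IHm by (intros; apply H; lia).
  rewrite H by lia. lra. Qed.
Lemma sumR_single m f k : (k<m)%nat -> (forall i, (i<m)%nat -> i<>k -> f i = 0) -> sumR m f = f k.
Proof. induction m; intros Hk H; [lia|]. rewrite sumR_S.
  destruct (Nat.eq_dec k m) as [->|Hne].
  - rewrite sumR_zero by (intros; apply H; lia). lra.
  - rewrite IHm by (lia || (intros; apply H; lia)). rewrite (H m) by lia. lra. Qed.
Lemma sumR_term_le m f k : (k<m)%nat -> (forall i, (i<m)%nat -> 0 <= f i) -> f k <= sumR m f.
Proof. induction m; intros Hk H; [lia|]. rewrite sumR_S.
  destruct (Nat.eq_dec k m) as [->|Hne].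
  - assert (0 <= sumR m f) by (apply sumR_nonneg; intros; apply H; lia). lra.
  - assert (f k <= sumR m f) by (apply IHm; [lia| intros; apply H; lia]).
    assert (0 <= f m) by (apply H; lia). lra. Qed.
Lemma sumR_abs m f : Rabs (sumR m f) <= sumR m (fun i => Rabs (f i)).
Proof. induction m; [rewrite !sumR_0, Rabs_R0; lra|]. rewrite !sumR_S.
  eapply Rle_trans; [apply Rabs_triang|]. lra. Qed.
Lemma sumR_swap m p f : sumR m (fun i => sumR p (fun j => f i j)) = sumR p (fun j => sumR m (fun i => f i j)).
Proof. induction m; [rewrite sumR_0; symmetry; apply sumR_zero; auto|].
  rewrite sumR_S, IHm. rewrite <- sumR_plus. apply sumR_ext. intros. rewrite sumR_S. reflexivity. Qed.

Lemma CS m b x : (sumR m (fun i => b i * x i))^2 <= sumR m (fun i => b i ^2) * sumR m (fun i => x i ^ 2).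
Proof.
  induction m; [rewrite !sumR_0; nra|]. rewrite !sumR_S.
  assert (HB: 0 <= sumR m (fun i => b i ^2)) by (apply sumR_nonneg; intros; nra).
  assert (HX: 0 <= sumR m (fun i => x i ^2)) by (apply sumR_nonneg; intros; nra).
  set (S0 := sumR m (fun i => b i * x i)) in *.
  set (B := sumR m (fun i => b i ^2)) in *.
  set (X := sumR m (fun i => x i ^2)) in *.
  set (bb := b m). set (xx := x m).
  assert (H1: (2*S0*bb*xx)^2 <= (B*xx^2 + bb^2*X)^2).
  { assert (0 <= (bb*xx)^2) by apply pow2_ge_0.
    assert (S0^2 * (bb*xx)^2 <= B*X*(bb*xx)^2) by nra.
    assert (0 <= (B*xx^2 - bb^2*X)^2) by apply pow2_ge_0.
    replace ((B*xx^2 + bb^2*X)^2) with ((B*xx^2 - bb^2*X)^2 + 4*(B*X*(bb*xx)^2)) by ring.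
    replace ((2*S0*bb*xx)^2) with (4*(S0^2*(bb*xx)^2)) by ring. lra. }
  assert (H2: 0 <= B*xx^2 + bb^2*X) by nra.
  assert (H3: 2*S0*bb*xx <= B*xx^2 + bb^2*X) by nra.
  nra.
Qed.

Definition sq n (x:vec) := sumR n (fun i => x i ^ 2).
Lemma sq_nonneg n x : 0 <= sq n x.
Proof. apply sumR_nonneg; intros; apply pow2_ge_0. Qed.

Lemma mv_ext n M x x' : (forall j, (j<n)%nat -> x j = x' j) -> forall i, mv n M x i = mv n M x' i.
Proof. intros H i. unfold mv. apply sumR_ext. intros j Hj. rewrite H; auto. Qed.
Lemma mv_minus n M x x' i : mv n M x i - mv n M x' i = mv n M (fun j => x j - x' j) i.
Proof. unfold mv. rewrite <- sumR_minus. apply sumR_ext. intros; ring. Qed.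
Lemma mv_lin n M x z t i : mv n M (fun j => x j + t * z j) i = mv n M x i + t * mv n M z i.
Proof. unfold mv. rewrite <- sumR_scal, <- sumR_plus. apply sumR_ext. intros; ring. Qed.

Lemma schur_id m A x : symmetric (S m) A -> A m m <> 0 ->
  dot (S m) x (mv (S m) A x) =
  dot m x (mv m (fun i j => A i j - A i m * A m j / A m m) x)
  + A m m * (x m + sumR m (fun j => A m j * x j) / A m m)^2.
Proof.
  intros Hs Ha. unfold dot, mv.
  rewrite sumR_S.
  set (a := A m m) in *. set (beta := sumR m (fun j => A m j * x j)).
  transitivity (sumR m (fun i => x i * sumR m (fun j => A i j * x j)) + x m * beta + x m * (beta + a * x m)).
  { f_equal.
    - rewrite (sumR_ext m _ (fun i => x i * sumR m (fun j => A i j * x j) + x m * (A m i * x i))).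
      + rewrite sumR_plus, sumR_scal. reflexivity.
      + intros i Hi. rewrite sumR_S. rewrite (Hs i m) by lia. ring.
    - rewrite sumR_S. reflexivity. }
  rewrite (sumR_ext m (fun i => x i * sumR m (fun j => (A i j - A i m * A m j / a) * x j))
     (fun i => x i * sumR m (fun j => A i j * x j) - (beta / a) * (A m i * x i))).
  2:{ intros i Hi. rewrite (sumR_ext m _ (fun j => A i j * x j - (A i m / a) * (A m j * x j))).
      2:{ intros; field; exact Ha. }
      rewrite sumR_minus, sumR_scal. fold beta. rewrite (Hs i m) by lia. field. exact Ha. }
  rewrite sumR_minus, sumR_scal. fold beta. field. exact Ha.
Qed.

Lemma neqb i m : (i < m)%nat -> Nat.eqb i m = false.
Proof. intro H. apply Nat.eqb_neq. lia. Qed.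

Lemma coercive n : forall A, symmetric n A -> pos_def n A ->
  exists c, c > 0 /\ forall x, c * sq n x <= dot n x (mv n A x).
Proof.
  induction n as [|m IH]; intros A Hs Hp.
  - exists 1. split; [lra|]. intros x. unfold sq, dot. rewrite !sumR_0. lra.
  - assert (Ha: A m m > 0).
    { set (e := fun j : nat => if Nat.eqb j m then 1 else 0).
      assert (He: dot (S m) e (mv (S m) A e) = A m m).
      { unfold dot. rewrite sumR_S. rewrite sumR_zero.
        2:{ intros i Hi. unfold e. rewrite neqb by lia. ring. }
        unfold mv. rewrite sumR_S, sumR_zero.
        2:{ intros j Hj. unfold e. rewrite neqb by lia. ring. }
        unfold e. rewrite Nat.eqb_refl. ring. }
      rewrite <- He. apply Hp. exists m. split; [lia|]. unfold e. rewrite Nat.eqb_refl. lra. }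
    pose (C := fun i j => A i j - A i m * A m j / A m m).
    assert (HsC: symmetric m C).
    { intros i j Hi Hj. unfold C. rewrite (Hs j i), (Hs j m), (Hs m i) by lia. unfold Rdiv. ring. }
    assert (Hid: forall x, dot (S m) x (mv (S m) A x) = dot m x (mv m C x)
               + A m m * (x m + sumR m (fun j => A m j * x j) / A m m)^2).
    { intro x. apply schur_id; auto; lra. }
    assert (HpC: pos_def m C).
    { intros x [i [Hi Hxi]].
      set (beta := sumR m (fun j => A m j * x j)).
      set (xt := fun j => if Nat.eqb j m then - beta / A m m else x j).
      assert (Hxt: forall j, (j < m)%nat -> xt j = x j).
      { intros j Hj. unfold xt. rewrite neqb by lia. reflexivity. }
      assert (Hpos: dot (S m) xt (mv (S m) A xt) > 0).
      { apply Hp. exists i. split; [lia|]. rewrite Hxt by lia. exact Hxi. }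
      rewrite Hid in Hpos.
      assert (Hb: sumR m (fun j => A m j * xt j) = beta).
      { apply sumR_ext. intros j Hj. rewrite Hxt by lia. reflexivity. }
      assert (Hm: xt m = - beta / A m m). { unfold xt. rewrite Nat.eqb_refl. reflexivity. }
      rewrite Hb, Hm in Hpos.
      assert (Hd: dot m xt (mv m C xt) = dot m x (mv m C x)).
      { unfold dot. apply sumR_ext. intros j Hj. rewrite Hxt by lia.
        rewrite (mv_ext m C xt x Hxt). reflexivity. }
      rewrite Hd in Hpos.
      replace (- beta / A m m + beta / A m m) with 0 in Hpos by (field; lra).
      simpl in Hpos. lra. }
    destruct (IH C HsC HpC) as [c' [Hc' Hcoer]].
    set (a := A m m) in *.
    set (B := sumR m (fun j => A m j ^ 2)).
    assert (HB: 0 <= B) by (apply sumR_nonneg; intros; apply pow2_ge_0).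
    set (K1 := (1 + 2*B/(a*a))/c').
    set (K2 := 2/a).
    assert (HK1: 0 < K1) by (unfold K1; apply Rdiv_lt_0_compat; [|lra];
       assert (0 <= 2*B/(a*a)) by (apply Rmult_le_pos; [lra| left; apply Rinv_0_lt_compat; nra]); lra).
    assert (HK2: 0 < K2) by (unfold K2; apply Rdiv_lt_0_compat; lra).
    exists (/ (K1 + K2)). split. { apply Rinv_0_lt_compat. lra. }
    intros x. rewrite Hid.
    set (beta := sumR m (fun j => A m j * x j)).
    set (t := x m).
    set (QC := dot m x (mv m C x)).
    set (sx := sq m x).
    assert (Hsq: sq (S m) x = sx + t^2) by (unfold sq, sx, t; rewrite sumR_S; reflexivity).
    rewrite Hsq.
    assert (CSb: beta^2 <= B * sx) by (apply CS).
    assert (Hsx: 0 <= sx) by apply sq_nonneg.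
    assert (HQ: c' * sx <= QC) by apply Hcoer.
    set (s := beta / a).
    set (P := a * (t + s)^2).
    assert (HP: 0 <= P) by (unfold P; apply Rmult_le_pos; [lra| apply pow2_ge_0]).
    assert (H1: t^2 <= 2*(t+s)^2 + 2*s^2) by (assert (0 <= (t + 2*s)^2) by apply pow2_ge_0; nra).
    assert (H2: s^2 <= B * sx / (a*a)).
    { unfold s. replace ((beta/a)^2) with (beta^2/(a*a)) by (field; lra).
      apply Rmult_le_compat_r; [left; apply Rinv_0_lt_compat; nra | lra]. }
    assert (H3: (1 + 2*B/(a*a)) * sx <= K1 * QC).
    { unfold K1. assert (sx <= QC / c') by (apply Rmult_le_reg_l with c'; [lra|]; field_simplify; lra).
      assert (0 <= 1 + 2*B/(a*a)) by (assert (0 <= 2*B/(a*a)) by (apply Rmult_le_pos; [lra| left; apply Rinv_0_lt_compat; nra]); lra).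
      replace ((1 + 2 * B / (a * a)) / c' * QC) with ((1 + 2*B/(a*a)) * (QC / c')) by (field; lra).
      apply Rmult_le_compat_l; auto. }
    assert (H4: 2*(t+s)^2 = K2 * P) by (unfold K2, P; field; lra).
    assert (H5: 2 * s^2 <= 2*B*sx/(a*a)).
    { replace (2*B*sx/(a*a)) with (2 * (B*sx/(a*a))) by (field; lra). lra. }
    assert (H6: sx + t^2 <= K1 * QC + K2 * P).
    { replace ((1 + 2 * B / (a * a)) * sx) with (sx + 2*B*sx/(a*a)) in H3 by (field; lra). lra. }
    assert (HQ0: 0 <= QC) by nra.
    assert (H7: sx + t^2 <= (K1 + K2) * (QC + P)) by nra.
    apply Rmult_le_reg_l with (K1 + K2); [lra|].
    rewrite <- Rmult_assoc, Rinv_r by lra. lra.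
Qed.

Definition Phi n A (w y v : vec) := sumR n (fun i => Rabs (v i) - Rabs (y i) - (w i - mv n A y i) * (v i - y i)).

Lemma VI_Phi n A w y : solves_VI n A w y <-> forall v, Phi n A w y v >= 0.
Proof.
  assert (E: forall v, dot n (mv n A y) (fun i => v i - y i) + norm1 n v - norm1 n y
                       - dot n w (fun i => v i - y i) = Phi n A w y v).
  { intro v. unfold Phi, dot, norm1. rewrite <- sumR_plus, <- !sumR_minus.
    apply sumR_ext. intros; ring. }
  split.
  - intros H v. rewrite <- E. specialize (H v). lra.
  - intros H v. specialize (H v). rewrite <- E in H. lra.
Qed.

Definition pert (y : vec) i t : vec := fun j => if Nat.eqb j i then y i + t else y j.

Lemma Phi_pert n A w y i t : (i < n)%nat ->
  Phi n A w y (pert y i t) = Rabs (y i + t) - Rabs (y i) - (w i - mv n A y i) * t.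
Proof.
  intro Hi. unfold Phi. rewrite (sumR_single n _ i Hi).
  - unfold pert. rewrite Nat.eqb_refl. ring_simplify (y i + t - y i). reflexivity.
  - intros j Hj Hne. unfold pert. replace (Nat.eqb j i) with false by (symmetry; apply Nat.eqb_neq; auto). ring.
Qed.

Lemma VI_comp n A w y : solves_VI n A w y -> forall i, (i<n)%nat ->
  Rabs (w i - mv n A y i) <= 1 /\ y i * (w i - mv n A y i) = Rabs (y i).
Proof.
  intros H i Hi. rewrite VI_Phi in H.
  set (q := w i - mv n A y i).
  assert (H1 := H (pert y i (- y i))). rewrite Phi_pert in H1 by auto. fold q in H1.
  assert (H2 := H (pert y i (y i))). rewrite Phi_pert in H2 by auto. fold q in H2.
  assert (H3 := H (pert y i 1)). rewrite Phi_pert in H3 by auto. fold q in H3.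
  assert (H4 := H (pert y i (-1))). rewrite Phi_pert in H4 by auto. fold q in H4.
  replace (y i + - y i) with 0 in H1 by ring. rewrite Rabs_R0 in H1.
  replace (y i + y i) with (2 * y i) in H2 by ring. rewrite Rabs_mult, (Rabs_right 2) in H2 by lra.
  assert (Rabs (y i + 1) <= Rabs (y i) + 1) by (eapply Rle_trans; [apply Rabs_triang| rewrite Rabs_R1; lra]).
  assert (Rabs (y i + -1) <= Rabs (y i) + 1) by (eapply Rle_trans; [apply Rabs_triang| assert (Rabs (-1) = 1) by (unfold Rabs; destruct Rcase_abs; lra); lra]).
  split.
  - apply Rabs_le. lra.
  - lra.
Qed.

Lemma comp_VI n A w y : (forall i, (i<n)%nat ->
  Rabs (w i - mv n A y i) <= 1 /\ y i * (w i - mv n A y i) = Rabs (y i)) -> solves_VI n A w y.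
Proof.
  intro H. apply VI_Phi. intro v. apply Rle_ge. apply sumR_nonneg. intros i Hi.
  destruct (H i Hi) as [H1 H2]. set (q := w i - mv n A y i) in *.
  assert (q * v i <= Rabs (v i)).
  { eapply Rle_trans; [apply Rle_abs|]. rewrite Rabs_mult.
    assert (0 <= Rabs (v i)) by apply Rabs_pos. nra. }
  nra.
Qed.

Lemma lip n A c w y w' y' : c > 0 -> (forall x, c * sq n x <= dot n x (mv n A x)) ->
  solves_VI n A w y -> solves_VI n A w' y' ->
  sq n (fun i => y' i - y i) <= sq n (fun i => w' i - w i) / (c*c).
Proof.
  intros Hc Hco H1 H2. rewrite VI_Phi in H1, H2.
  specialize (H1 y'). specialize (H2 y).
  set (d := fun i => y' i - y i). set (a := fun i => w' i - w i).
  assert (E: sumR n (fun i => a i * d i) - dot n d (mv n A d) = Phi n A w y y' + Phi n A w' y' y).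
  { unfold Phi, dot. rewrite <- sumR_minus, <- sumR_plus. apply sumR_ext. intros i Hi.
    unfold a, d. rewrite <- mv_minus. ring. }
  assert (Hd := Hco d).
  assert (Hb: sumR n (fun i => a i * d i) <= /(2*c) * sq n a + c/2 * sq n d).
  { unfold sq. rewrite <- (sumR_scal n (/(2*c))), <- sumR_scal, <- sumR_plus.
    apply sumR_le. intros i Hi.
    assert (0 <= (a i / c - d i)^2 * c) by (apply Rmult_le_pos; [apply pow2_ge_0|lra]).
    apply Rminus_le. apply Rmult_le_reg_l with 2; [lra|].
    replace (2 * (a i * d i - (/ (2 * c) * a i ^ 2 + c / 2 * d i ^ 2))) with (- ((a i / c - d i)^2 * c)) by (field; lra).
    lra. }
  fold d a.
  apply Rmult_le_reg_l with (c*c); [nra|].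
  replace (c * c * (sq n a / (c * c))) with (sq n a) by (field; lra).
  assert (c * sq n d <= /(2*c) * sq n a + c/2 * sq n d) by lra.
  assert (c * (c * sq n d) <= c * (/(2*c) * sq n a + c/2 * sq n d)) by (apply Rmult_le_compat_l; lra).
  replace (c * (/(2*c) * sq n a + c/2 * sq n d)) with (sq n a / 2 + c * (c * sq n d)/2) in H0 by (field; lra).
  nra.
Qed.

Lemma uniq n A c w y y' : c > 0 -> (forall x, c * sq n x <= dot n x (mv n A x)) ->
  solves_VI n A w y -> solves_VI n A w y' -> forall i, (i<n)%nat -> y i = y' i.
Proof.
  intros Hc Hco H1 H2 i Hi.
  assert (H := lip n A c w y w y' Hc Hco H1 H2).
  assert (Z: sq n (fun i => w i - w i) = 0) by (apply sumR_zero; intros; simpl; ring).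
  rewrite Z in H. unfold Rdiv in H. rewrite Rmult_0_l in H.
  assert (T: (y' i - y i)^2 <= sq n (fun i => y' i - y i)).
  { apply (sumR_term_le n (fun i => (y' i - y i)^2)); auto. intros; apply pow2_ge_0. }
  assert ((y' i - y i)^2 = 0) by (assert (0 <= (y' i - y i)^2) by apply pow2_ge_0; lra).
  nra.
Qed.

Lemma CV_const c : Un_cv (fun _ => c) c.
Proof. intros eps He. exists 0%nat. intros. unfold R_dist. rewrite Rminus_diag_eq, Rabs_R0 by auto; lra. Qed.

Lemma CV_ext a b l : (forall k, a k = b k) -> Un_cv a l -> Un_cv b l.
Proof. intros E H eps He. destruct (H eps He) as [N HN]. exists N. intros k Hk. rewrite <- E. auto. Qed.

Lemma CV_sumR m (f : nat -> nat -> R) (l : nat -> R) :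
  (forall j, (j<m)%nat -> Un_cv (fun k => f k j) (l j)) -> Un_cv (fun k => sumR m (f k)) (sumR m l).
Proof.
  induction m; intro H.
  - rewrite sumR_0. apply CV_ext with (fun _ => 0); [intros; rewrite sumR_0; auto | apply CV_const].
  - rewrite sumR_S. apply CV_ext with (fun k => sumR m (f k) + f k m); [intros; rewrite sumR_S; auto|].
    apply CV_plus; [apply IHm; intros; apply H; lia| apply H; lia].
Qed.

Lemma unif n (Q : nat -> nat -> Prop) : (forall i, (i<n)%nat -> exists K, forall k, (K<=k)%nat -> Q i k) ->
  exists K, forall i k, (i<n)%nat -> (K<=k)%nat -> Q i k.
Proof.
  induction n; intro H. { exists 0%nat; intros; lia. }
  destruct IHn as [K1 HK1]. { intros; apply H; lia. }
  destruct (H n) as [K2 HK2]; [lia|].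
  exists (max K1 K2). intros i k Hi Hk. destruct (Nat.eq_dec i n) as [->|].
  - apply HK2; lia.
  - apply HK1; lia.
Qed.

Lemma fmin n (P : nat -> Prop) (f : nat -> R) : (forall i, (i<n)%nat -> P i -> 0 < f i) ->
  exists m, 0 < m /\ forall i, (i<n)%nat -> P i -> m <= f i.
Proof.
  induction n; intro H. { exists 1; split; [lra| intros; lia]. }
  destruct IHn as [m [Hm Hm']]. { intros; apply H; auto; lia. }
  destruct (classic (P n)) as [Pn|nPn].
  - exists (Rmin m (f n)). split. { apply Rmin_pos; auto; apply H; auto. }
    intros i Hi Pi. destruct (Nat.eq_dec i n) as [->|].
    + apply Rmin_r.
    + eapply Rle_trans; [apply Rmin_l| apply Hm'; auto; lia].
  - exists m. split; auto. intros i Hi Pi. destruct (Nat.eq_dec i n) as [->|]; [contradiction|]. apply Hm'; auto; lia.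
Qed.

Lemma conv_S n A c S us u : c > 0 -> (forall x, c * sq n x <= dot n x (mv n A x)) ->
  (forall w, solves_VI n A w (S w)) -> (forall i, (i<n)%nat -> Un_cv (fun k => us k i) (u i)) ->
  forall i, (i<n)%nat -> Un_cv (fun k => S (us k) i) (S u i).
Proof.
  intros Hc Hco HS Hu i Hi eps He.
  assert (Hsq: Un_cv (fun k => sq n (fun j => us k j - u j)) (sumR n (fun _ => 0))).
  { unfold sq. apply CV_sumR. intros j Hj. apply CV_ext with (fun k => (us k j - u j) * (us k j - u j)); [intros; ring|].
    replace 0 with ((u j - u j) * (u j - u j)) by ring. apply CV_mult; apply CV_minus; auto; apply CV_const. }
  rewrite sumR_zero in Hsq by auto.
  destruct (Hsq (eps*eps*(c*c))) as [K HK]. { apply Rmult_lt_0_compat; nra. }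
  exists K. intros k Hk. specialize (HK k Hk). unfold R_dist in *. rewrite Rminus_0_r in HK.
  assert (H1 := lip n A c u (S u) (us k) (S (us k)) Hc Hco (HS u) (HS (us k))).
  assert (T: (S (us k) i - S u i)^2 <= sq n (fun j => S (us k) j - S u j)).
  { apply (sumR_term_le n (fun j => (S (us k) j - S u j)^2)); auto. intros; apply pow2_ge_0. }
  rewrite Rabs_right in HK by (apply Rle_ge, sq_nonneg).
  assert (sq n (fun j => us k j - u j) / (c*c) < eps*eps).
  { apply Rmult_lt_reg_l with (c*c); [nra|].
    replace (c*c*(sq n (fun j => us k j - u j) / (c*c))) with (sq n (fun j => us k j - u j)) by (field; lra). nra. }
  assert ((S (us k) i - S u i)^2 < eps*eps) by lra.
  apply Rabs_def1; nra.
Qed.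

Lemma conv_q n A c S us u : c > 0 -> (forall x, c * sq n x <= dot n x (mv n A x)) ->
  (forall w, solves_VI n A w (S w)) -> (forall i, (i<n)%nat -> Un_cv (fun k => us k i) (u i)) ->
  forall i, (i<n)%nat -> Un_cv (fun k => qv n A S (us k) i) (qv n A S u i).
Proof.
  intros Hc Hco HS Hu i Hi. unfold qv. apply CV_minus; auto. unfold mv. apply CV_sumR.
  intros j Hj. apply CV_mult; [apply CV_const| eapply conv_S; eauto].
Qed.

Lemma inb_true (P : Prop) : P -> inb P = true.
Proof. intro H. unfold inb. destruct (excluded_middle_informative P); auto; contradiction. Qed.
Lemma inb_false (P : Prop) : ~ P -> inb P = false.
Proof. intro H. unfold inb. destruct (excluded_middle_informative P); auto; contradiction. Qed.

Lemma abs_le_vnorm n h j : (j<n)%nat -> Rabs (h j) <= vnorm n h.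
Proof.
  intro Hj. unfold vnorm, dot. rewrite <- sqrt_Rsqr_abs. apply sqrt_le_1_alt.
  unfold Rsqr. apply (sumR_term_le n (fun i => h i * h i)); auto. intros; nra.
Qed.

Lemma bound_mv_gen n M x i B : (forall j, (j<n)%nat -> Rabs (x j) <= B) ->
  Rabs (mv n M x i) <= sumR n (fun j => Rabs (M i j)) * B.
Proof.
  intro H. unfold mv. eapply Rle_trans; [apply sumR_abs|].
  rewrite Rmult_comm, <- sumR_scal. apply sumR_le. intros j Hj. rewrite Rabs_mult.
  assert (0 <= Rabs (M i j)) by apply Rabs_pos. specialize (H j Hj). nra.
Qed.

Lemma row_le_tot n M i : (i<n)%nat -> sumR n (fun j => Rabs (M i j)) <= sumR n (fun i => sumR n (fun j => Rabs (M i j))).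
Proof.
  intro Hi. apply (sumR_term_le n (fun i => sumR n (fun j => Rabs (M i j)))); auto.
  intros; apply sumR_nonneg; intros; apply Rabs_pos.
Qed.

Lemma tot_nonneg n (M : mat) : 0 <= sumR n (fun i => sumR n (fun j => Rabs (M i j))).
Proof. apply sumR_nonneg; intros; apply sumR_nonneg; intros; apply Rabs_pos. Qed.

Lemma mv_add n M x z i : mv n M (fun j => x j + z j) i = mv n M x i + mv n M z i.
Proof. unfold mv. rewrite <- sumR_plus. apply sumR_ext. intros; ring. Qed.

Lemma sign_keep q y d : Rabs q <= 1 -> y * q = Rabs y -> y <> 0 -> Rabs d < Rabs y ->
  (y + d) * q = Rabs (y + d).
Proof.
  intros H1 H2 H3 H4. destruct (Rlt_or_le 0 y) as [Hy|Hy].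
  - rewrite (Rabs_right y) in H2, H4 by lra. assert (q = 1).
    { apply Rmult_eq_reg_l with y; [lra | exact H3]. }
    subst q. assert (d > - y) by (apply Rabs_def2 in H4; lra).
    rewrite Rabs_right by lra. ring.
  - assert (y < 0) by lra. rewrite (Rabs_left y) in H2, H4 by lra. assert (q = -1).
    { apply Rmult_eq_reg_l with y; [lra | exact H3]. }
    subst q. assert (d < - y) by (apply Rabs_def2 in H4; lra).
    rewrite Rabs_left by lra. ring.
Qed.

Lemma tt_cv : Un_cv (fun j => / (INR j + 2)) 0.
Proof.
  intros eps He. destruct (INR_unbounded (/eps)) as [N HN]. exists N. intros j Hj.
  unfold R_dist. rewrite Rminus_0_r.
  assert (INR N <= INR j) by (apply le_INR; lia).
  assert (0 <= INR j) by apply pos_INR.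
  rewrite Rabs_right by (apply Rle_ge; left; apply Rinv_0_lt_compat; lra).
  rewrite <- (Rinv_inv eps). apply Rinv_lt_contravar.
  - apply Rmult_lt_0_compat; [apply Rinv_0_lt_compat|]; lra.
  - lra.
Qed.

Lemma tt_bounds j : 0 < / (INR j + 2) < 1.
Proof.
  assert (0 <= INR j) by apply pos_INR. split.
  - apply Rinv_0_lt_compat; lra.
  - rewrite <- Rinv_1. apply Rinv_lt_contravar; lra.
Qed.

Lemma key n A c S u (N : nat -> Prop) Minv G :
  c > 0 -> (forall x, c * sq n x <= dot n x (mv n A x)) ->
  (forall w, solves_VI n A w (S w)) ->
  (forall i, (i<n)%nat -> As_set n A S u i -> N i) ->
  (forall i, (i<n)%nat -> N i -> As_set n A S u i \/ B_set n A S u i) ->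
  is_inverse n (A_N A N) Minv ->
  (forall i j, (i<n)%nat -> (j<n)%nat -> G i j = mm n Minv (chi_N N) i j) ->
  in_dB n S u G.
Proof.
  intros Hc Hco HS HN1 HN2 Hinv HG.
  assert (HAG: forall i j, (i<n)%nat -> (j<n)%nat -> sumR n (fun k => A_N A N i k * G k j) = chi_N N i j).
  { intros i j Hi Hj.
    rewrite (sumR_ext n _ (fun k => sumR n (fun l => A_N A N i k * Minv k l * chi_N N l j))).
    2:{ intros k Hk. rewrite HG by auto. unfold mm. rewrite <- sumR_scal. apply sumR_ext. intros; ring. }
    rewrite sumR_swap.
    rewrite (sumR_ext n _ (fun l => idm i l * chi_N N l j)).
    2:{ intros l Hl. rewrite <- (proj1 (Hinv i l Hi Hl)). unfold mm.
        rewrite Rmult_comm, <- sumR_scal. apply sumR_ext. intros; ring. }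
    rewrite (sumR_single n _ i Hi).
    - unfold idm. rewrite Nat.eqb_refl. ring.
    - intros l Hl Hne. unfold idm. replace (Nat.eqb i l) with false by (symmetry; apply Nat.eqb_neq; auto). ring. }
  assert (GN: forall i j, (i<n)%nat -> (j<n)%nat -> N i -> G i j = 0).
  { intros i j Hi Hj Ni. specialize (HAG i j Hi Hj).
    rewrite (sumR_single n _ i Hi) in HAG.
    - unfold A_N in HAG. rewrite (inb_true _ Ni) in HAG. simpl in HAG. unfold idm in HAG.
      rewrite Nat.eqb_refl in HAG. rewrite Rmult_1_l in HAG. rewrite HAG.
      unfold chi_N. destruct (Nat.eqb i j) eqn:E; auto.
      apply Nat.eqb_eq in E. subst j. rewrite (inb_true _ Ni). reflexivity.
    - intros k Hk Hne. unfold A_N. rewrite (inb_true _ Ni). simpl. unfold idm.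
      replace (Nat.eqb i k) with false by (symmetry; apply Nat.eqb_neq; auto). ring. }
  assert (GA: forall i j, (i<n)%nat -> (j<n)%nat -> ~ N i -> sumR n (fun k => A i k * G k j) = idm i j).
  { intros i j Hi Hj Ni. specialize (HAG i j Hi Hj).
    rewrite (sumR_ext n (fun k => A_N A N i k * G k j) (fun k => A i k * G k j)) in HAG.
    - rewrite HAG. unfold chi_N, idm. destruct (Nat.eqb i j) eqn:E; auto.
      rewrite (inb_false _ Ni). reflexivity.
    - intros k Hk. destruct (classic (N k)) as [Nk|Nk].
      + rewrite (GN k j Hk Hj Nk). ring.
      + unfold A_N. rewrite (inb_false _ Ni), (inb_false _ Nk). reflexivity. }
  assert (MGN: forall h i, (i<n)%nat -> N i -> mv n G h i = 0).
  { intros h i Hi Ni. unfold mv. apply sumR_zero. intros j Hj. rewrite GN by auto. ring. }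
  assert (MAG: forall h i, (i<n)%nat -> ~ N i -> mv n A (mv n G h) i = h i).
  { intros h i Hi Ni. unfold mv.
    rewrite (sumR_ext n _ (fun k => sumR n (fun j => A i k * (G k j * h j)))).
    2:{ intros k Hk. rewrite <- sumR_scal. reflexivity. }
    rewrite sumR_swap.
    rewrite (sumR_ext n _ (fun j => idm i j * h j)).
    2:{ intros j Hj. rewrite <- (GA i j Hi Hj Ni). rewrite Rmult_comm, <- sumR_scal. apply sumR_ext. intros; ring. }
    rewrite (sumR_single n _ i Hi).
    - unfold idm. rewrite Nat.eqb_refl. ring.
    - intros l Hl Hne. unfold idm. replace (Nat.eqb i l) with false by (symmetry; apply Nat.eqb_neq; auto). ring. }
  set (y0 := S u). set (q0 := qv n A S u).
  assert (comp0: forall i, (i<n)%nat -> Rabs (q0 i) <= 1 /\ y0 i * q0 i = Rabs (y0 i)).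
  { intros i Hi. apply (VI_comp n A u y0 (HS u) i Hi). }
  assert (NN: forall i, (i<n)%nat -> N i -> y0 i = 0).
  { intros i Hi Ni. destruct (HN2 i Hi Ni) as [[_ Ha]|[_ [Hb _]]]; auto.
    destruct (comp0 i Hi) as [_ Hc2]. fold q0 in Ha.
    destruct (Req_dec_T (y0 i) 0) as [E|E]; auto.
    assert (Rabs (y0 i) > 0) by (apply Rabs_pos_lt; auto).
    rewrite <- Hc2 in H. exfalso.
    assert (Rabs (y0 i * q0 i) < Rabs (y0 i)) by (rewrite Rabs_mult; nra).
    rewrite Hc2 in H0. rewrite Rabs_Rabsolu in H0. lra. }
  assert (notN: forall i, (i<n)%nat -> ~ N i -> y0 i = 0 -> Rabs (q0 i) = 1).
  { intros i Hi Ni Hy. destruct (comp0 i Hi) as [H1 _].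
    destruct (Rlt_or_le (Rabs (q0 i)) 1) as [Hl|Hl]; [|lra].
    exfalso. apply Ni. apply HN1; auto. split; auto. }
  pose (z := fun i => if inb (N i) then 0 else if Req_dec_T (y0 i) 0 then q0 i else 0).
  pose (s := fun i => if inb (N i) then q0 i else 0).
  pose (yt := fun (t : R) i => y0 i + t * z i).
  pose (qt := fun (t : R) i => q0 i - t * s i).
  pose (ut := fun (t : R) i => mv n A (yt t) i + qt t i).
  assert (compt: forall t, 0 < t < 1 -> forall i, (i<n)%nat ->
     (Rabs (qt t i) <= 1 /\ yt t i * qt t i = Rabs (yt t i)) /\
     (N i -> yt t i = 0 /\ Rabs (qt t i) <= 1 - t) /\
     (~ N i -> yt t i <> 0 /\ Rabs (qt t i) = 1)).
  { intros t Ht i Hi. destruct (comp0 i Hi) as [C1 C2].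
    destruct (classic (N i)) as [Ni|Ni].
    - assert (E1: yt t i = 0) by (unfold yt, z; rewrite (inb_true _ Ni), (NN i Hi Ni); ring).
      assert (E2: qt t i = (1 - t) * q0 i) by (unfold qt, s; rewrite (inb_true _ Ni); ring).
      assert (E3: Rabs (qt t i) <= 1 - t) by (rewrite E2, Rabs_mult, (Rabs_right (1-t)) by lra; nra).
      split; [|split; [auto| tauto]].
      split; [lra|]. rewrite E1, Rabs_R0. ring.
    - assert (E2: qt t i = q0 i) by (unfold qt, s; rewrite (inb_false _ Ni); ring).
      destruct (Req_dec_T (y0 i) 0) as [Y|Y].
      + assert (E1: yt t i = t * q0 i)
          by (unfold yt, z; rewrite (inb_false _ Ni); destruct (Req_dec_T (y0 i) 0); [rewrite Y; ring|contradiction]).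
        assert (Q1 := notN i Hi Ni Y).
        rewrite E1, E2. split; [|split; [tauto|]].
        * split; [lra|]. rewrite Rabs_mult, Q1, (Rabs_right t) by lra.
          assert (q0 i * q0 i = 1).
          { rewrite <- (Rabs_right (q0 i * q0 i)) by (apply Rle_ge; nra). rewrite Rabs_mult, Q1. ring. }
          nra.
        * intros _. split; [|auto]. intro H0. apply Rmult_integral in H0. destruct H0; [lra|].
          rewrite H in Q1. rewrite Rabs_R0 in Q1. lra.
      + assert (E1: yt t i = y0 i)
          by (unfold yt, z; rewrite (inb_false _ Ni); destruct (Req_dec_T (y0 i) 0); [contradiction|ring]).
        rewrite E1, E2. split; [auto|split; [tauto|]]. intros _. split; auto.
        assert (Rabs (y0 i) > 0) by (apply Rabs_pos_lt; auto).
        apply Rmult_eq_reg_l with (Rabs (y0 i)); [|lra].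
        rewrite <- Rabs_mult, C2, Rabs_Rabsolu. ring. }
  assert (Sut: forall t, 0 < t < 1 -> solves_VI n A (ut t) (yt t)).
  { intros t Ht. apply comp_VI. intros i Hi.
    replace (ut t i - mv n A (yt t) i) with (qt t i) by (unfold ut; ring).
    destruct (compt t Ht i Hi) as [[C1 C2] _]. split; auto. }
  assert (SutE: forall t, 0 < t < 1 -> forall i, (i<n)%nat -> S (ut t) i = yt t i).
  { intros t Ht i Hi. symmetry. apply (uniq n A c (ut t) (yt t) (S (ut t)) Hc Hco (Sut t Ht) (HS (ut t)) i Hi). }
  assert (Hder: forall t, 0 < t < 1 -> has_derivative n S (ut t) G).
  { intros t Ht eps He.
    set (g := sumR n (fun i => sumR n (fun j => Rabs (G i j)))).
    set (aA := sumR n (fun i => sumR n (fun j => Rabs (A i j)))).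
    assert (Hg: 0 <= g) by apply tot_nonneg.
    assert (Ha: 0 <= aA) by apply tot_nonneg.
    destruct (fmin n (fun i => ~ N i) (fun i => Rabs (yt t i))) as [m [Hm Hm']].
    { intros i Hi Ni. apply Rabs_pos_lt. apply (proj2 (proj2 (compt t Ht i Hi)) Ni). }
    exists (Rmin (t / (1 + aA * g)) (m / (1 + g))). split.
    { apply Rmin_pos; apply Rdiv_lt_0_compat; nra. }
    intros h Hh.
    set (vn := vnorm n h) in *.
    assert (Hvn: 0 <= vn) by (unfold vn, vnorm; apply sqrt_pos).
    assert (Hv1: (1 + aA * g) * vn < t).
    { assert (H0: vn < t / (1 + aA*g)) by (eapply Rlt_le_trans; [exact Hh| apply Rmin_l]).
      apply Rmult_lt_compat_l with (r := 1 + aA*g) in H0; [|nra].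
      replace ((1 + aA * g) * (t / (1 + aA * g))) with t in H0 by (field; nra). exact H0. }
    assert (Hv2: (1 + g) * vn < m).
    { assert (H0: vn < m / (1 + g)) by (eapply Rlt_le_trans; [exact Hh| apply Rmin_r]).
      apply Rmult_lt_compat_l with (r := 1 + g) in H0; [|nra].
      replace ((1 + g) * (m / (1 + g))) with m in H0 by (field; nra). exact H0. }
    assert (Hh_i: forall i, (i<n)%nat -> Rabs (h i) <= vn) by (intros; apply abs_le_vnorm; auto).
    assert (Hgh: forall i, (i<n)%nat -> Rabs (mv n G h i) <= g * vn).
    { intros i Hi. eapply Rle_trans; [apply (bound_mv_gen n G h i vn); auto|].
      apply Rmult_le_compat_r; auto. apply row_le_tot; auto. }
    assert (Hagh: forall i, (i<n)%nat -> Rabs (mv n A (mv n G h) i) <= aA * g * vn).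
    { intros i Hi. eapply Rle_trans; [apply (bound_mv_gen n A (mv n G h) i (g*vn)); auto|].
      rewrite Rmult_assoc. apply Rmult_le_compat_r; [nra| apply row_le_tot; auto]. }
    set (y' := fun i => yt t i + mv n G h i).
    assert (Sy': solves_VI n A (fun k => ut t k + h k) y').
    { apply comp_VI. intros i Hi.
      replace (ut t i + h i - mv n A y' i) with (qt t i + h i - mv n A (mv n G h) i)
        by (unfold y', ut; rewrite mv_add; ring).
      destruct (compt t Ht i Hi) as [[C1 C2] [C3 C4]].
      destruct (classic (N i)) as [Ni|Ni].
      - destruct (C3 Ni) as [Y0 Q0]. unfold y'. rewrite Y0, (MGN h i Hi Ni), Rplus_0_r, Rabs_R0, Rmult_0_l.
        split; [|reflexivity].
        assert (Rabs (qt t i + h i - mv n A (mv n G h) i) <= Rabs (qt t i) + Rabs (h i) + Rabs (mv n A (mv n G h) i)).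
        { unfold Rminus. eapply Rle_trans; [apply Rabs_triang|]. rewrite Rabs_Ropp.
          assert (T:= Rabs_triang (qt t i) (h i)). lra. }
        specialize (Hh_i i Hi). specialize (Hagh i Hi). nra.
      - rewrite (MAG h i Hi Ni). replace (qt t i + h i - h i) with (qt t i) by ring.
        destruct (C4 Ni) as [Y0 Q0]. split; [lra|]. unfold y'.
        apply sign_keep; auto.
        specialize (Hgh i Hi). specialize (Hm' i Hi Ni). simpl in Hm'. nra. }
    assert (E: forall i, (i<n)%nat -> S (fun k => ut t k + h k) i - S (ut t) i - mv n G h i = 0).
    { intros i Hi. rewrite (SutE t Ht i Hi).
      rewrite <- (uniq n A c _ y' _ Hc Hco Sy' (HS _) i Hi). unfold y'. ring. }
    assert (Z: vnorm n (fun i => S (fun k => ut t k + h k) i - S (ut t) i - mv n G h i) = 0).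
    { unfold vnorm, dot. rewrite sumR_zero; [apply sqrt_0|]. intros i Hi. rewrite E by auto. ring. }
    rewrite Z. apply Rmult_le_pos; lra. }
  assert (Hut: forall t i, (i<n)%nat -> ut t i = u i + t * (mv n A z i - s i)).
  { intros t i Hi. unfold ut, yt, qt. rewrite mv_lin. unfold q0, qv. fold y0. ring. }
  exists (fun j => ut (/ (INR j + 2))), (fun _ => G). split; [|split].
  - intros i Hi.
    assert (L: Un_cv (fun j => u i + / (INR j + 2) * (mv n A z i - s i)) (u i + 0 * (mv n A z i - s i))).
    { apply CV_plus; [apply CV_const|]. apply CV_mult; [apply tt_cv| apply CV_const]. }
    replace (u i + 0 * (mv n A z i - s i)) with (u i) in L by ring.
    apply (CV_ext _ _ _ (fun j => eq_sym (Hut (/ (INR j + 2)) i Hi)) L).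
  - intros j. apply Hder. apply tt_bounds.
  - intros i k Hi Hk. apply CV_const.
Qed.

Theorem lemma4p4 (n : nat) (A : mat) (lmin lmax : R) (S : vec -> vec)
    (us : nat -> vec) (Ds : nat -> R) (u : vec) :
  symmetric n A -> pos_def n A ->
  is_min_eigenvalue n A lmin -> is_max_eigenvalue n A lmax ->
  (forall w, solves_VI n A w (S w)) ->
  (forall k, 0 < Ds k) ->
  (forall i, (i < n)%nat -> Un_cv (fun k => us k i) (u i)) ->
  Un_cv Ds 0 ->
  (exists K : nat, forall k, (K <= k)%nat ->
      (forall i, P_set n A S lmin lmax (us k) (Ds k) i -> B_set n A S u i) /\
      (forall G, G_set n A S lmin lmax (us k) (Ds k) G -> in_dB n S u G)) /\
  (forall eps, eps > 0 -> exists K : nat, forall k, (K <= k)%nat ->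
      forall G, G_set n A S lmin lmax (us k) (Ds k) G ->
        exists W, in_dB n S u W /\ mnorm n (fun i j => G i j - W i j) < eps).
Proof.
  intros Hs Hp Hmin Hmax HS HD Hu HDc.
  destruct (coercive n A Hs Hp) as [c [Hc Hco]].
  assert (Hy := conv_S n A c S us u Hc Hco HS Hu).
  assert (Hq := conv_q n A c S us u Hc Hco HS Hu).
  assert (HLy: Un_cv (fun k => L_y lmin * Ds k) 0).
  { replace 0 with (L_y lmin * 0) by ring. apply CV_mult; [apply CV_const| exact HDc]. }
  assert (HLq: Un_cv (fun k => L_q lmin lmax * Ds k) 0).
  { replace 0 with (L_q lmin lmax * 0) by ring. apply CV_mult; [apply CV_const| exact HDc]. }
  assert (Hidx: forall i, (i<n)%nat -> exists K, forall k, (K<=k)%nat ->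
     (P_set n A S lmin lmax (us k) (Ds k) i -> B_set n A S u i) /\
     (As_set n A S u i -> As_set n A S (us k) i) /\
     (As_set n A S (us k) i -> As_set n A S u i \/ B_set n A S u i)).
  { intros i Hi.
    destruct (VI_comp n A u (S u) (HS u) i Hi) as [C1 C2].
    change (u i - mv n A (S u) i) with (qv n A S u i) in C1, C2.
    destruct (Rlt_or_le (Rabs (qv n A S u i)) 1) as [Hl|Hl].
    - set (e := (1 - Rabs (qv n A S u i))/2).
      destruct (Hq i Hi e) as [K1 HK1]; [unfold e; lra|].
      destruct (HLq e) as [K2 HK2]; [unfold e; lra|].
      exists (max K1 K2). intros k Hk.
      specialize (HK1 k ltac:(lia)). specialize (HK2 k ltac:(lia)). unfold R_dist in *.
      rewrite Rminus_0_r in HK2.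
      assert (Hqk: Rabs (qv n A S (us k) i) < 1 - e).
      { assert (T:= Rabs_triang_inv (qv n A S (us k) i) (qv n A S u i)). unfold e in *. lra. }
      split; [|split].
      + intros [_ [_ HP]]. exfalso. apply Rabs_def2 in HP. destruct HP as [HP1 HP2].
        assert (T := Rle_abs (L_q lmin lmax * Ds k)). lra.
      + intros _. split; [auto| unfold e in *; lra].
      + intros _. left. split; auto.
    - assert (Hq1: Rabs (qv n A S u i) = 1) by lra.
      destruct (Req_dec_T (S u i) 0) as [Y|Y].
      + exists 0%nat. intros k _. assert (HB: B_set n A S u i) by (split; [|split]; auto).
        split; [auto| split; [intros [_ H]; lra| intros _; right; auto]].
      + set (e := Rabs (S u i) / 2).
        assert (He: e > 0) by (unfold e; assert (Rabs (S u i) > 0) by (apply Rabs_pos_lt; auto); lra).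
        destruct (Hy i Hi e He) as [K1 HK1].
        destruct (HLy e He) as [K2 HK2].
        exists (max K1 K2). intros k Hk.
        specialize (HK1 k ltac:(lia)). specialize (HK2 k ltac:(lia)). unfold R_dist in *.
        rewrite Rminus_0_r in HK2.
        assert (Hyk: Rabs (S (us k) i) > e).
        { assert (T:= Rabs_triang_inv (S u i) (S (us k) i)).
          rewrite Rabs_minus_sym in T. unfold e in *. lra. }
        split; [|split].
        * intros [_ [HP _]]. exfalso. assert (T := Rle_abs (L_y lmin * Ds k)). lra.
        * intros [_ H]. lra.
        * intros [_ HA]. exfalso.
          destruct (VI_comp n A (us k) (S (us k)) (HS _) i Hi) as [D1 D2].
          change (us k i - mv n A (S (us k)) i) with (qv n A S (us k) i) in D1, D2.
          assert (T: Rabs (S (us k) i * qv n A S (us k) i) = Rabs (S (us k) i))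
            by (rewrite D2, Rabs_Rabsolu; reflexivity).
          rewrite Rabs_mult in T.
          assert (0 <= Rabs (qv n A S (us k) i)) by apply Rabs_pos. nra. }
  destruct (unif n _ Hidx) as [K HK].
  assert (Part1: forall k, (K<=k)%nat ->
      (forall i, P_set n A S lmin lmax (us k) (Ds k) i -> B_set n A S u i) /\
      (forall G, G_set n A S lmin lmax (us k) (Ds k) G -> in_dB n S u G)).
  { intros k Hk. split.
    - intros i HP. apply (HK i k (proj1 HP) Hk). exact HP.
    - intros G [B0 [HB0 HG]]. cbv zeta in HG. destruct HG as [Minv [Hinv HG]].
      apply (key n A c S u (fun i => As_set n A S (us k) i \/ B0 i) Minv G Hc Hco HS); auto.
      + intros i Hi HA. left. apply (HK i k Hi Hk). auto.
      + intros i Hi [HA|HB].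
        * apply (HK i k Hi Hk); auto.
        * right. apply (HK i k Hi Hk). apply HB0. auto. }
  split.
  - exists K. exact Part1.
  - intros eps He. exists K. intros k Hk G HG. exists G. split.
    + apply (proj2 (Part1 k Hk)); auto.
    + unfold mnorm. rewrite sumR_zero; [rewrite sqrt_0; lra|].
      intros i Hi. apply sumR_zero. intros j Hj. simpl. ring.
Qed.
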